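(* Let $A$ be a connected monounary algebra and $a\in A$ with $A'=\{a\}$. If $A$ contains no cycle and the subalgebra $A\setminus P(a)$ is not isomorphic to $Z$, then there is $B\in\mathbf R(A)\cap\mathcal S^{(1)}$ such that $\mathbf V(A)=\mathbf V(B,E)$.
   Context: A monounary algebra is a pair $(A,f)$ with $A$ a nonempty set and $f:A\to A$; a partial monounary algebra allows $f$ to be partial. Direct products are coordinatewise. It is connected if for all $x,y$ there are $m,n\ge0$ with $f^m(x)=f^n(y)$; it contains a cycle if $f^k(x)=x$ for some $x$, $k\ge1$. A retract of $A$ is a nonempty subalgebra $M$ such that there is an endomorphism $h:A\to M$ with $h|_M=\mathrm{id}$; $\mathbf R(A)$ is the class of algebras isomorphic to a retract of $A$. A retract variety is a class closed under isomorphisms, retracts and direct products; $\mathbf V(\mathcal K)$ is the smallest retract variety containing $\mathcal K$, $\mathbf V(B,E)=\mathbf V(\{B,E\})$. For $x\in A$: $f^{-1}(x)=\{y:f(y)=x\}$, $f^{-n}(x)=\bigcup_{z\in f^{-(n-1)}(x)}f^{-1}(z)$, $P(x)=\{x\}\cup\bigcup_{n\ge1}f^{-n}(x)$, regarded as a partial monounary algebra with $f$ restricted to those $y\in P(x)$ with $f(y)\in P(x)$. $A^{(\infty)}$ is the set of $x\in A$ admitting $x_0=x,x_1,\dots$ with $f(x_n)=x_{n-1}$ for $n\ge1$; $A'=\{x\in A\setminus A^{(\infty)}: f(x)\in A^{(\infty)}\}$. Condition ($\bigstar$) on $(A,f)$: whenever $x_1,x_2,x_3\in A$ with $f(x_1)=f(x_2)=f(x_3)$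 and $P(x_1),P(x_2),P(x_3)$ pairwise isomorphic, then $|\{x_1,x_2,x_3\}|\le2$. $\mathcal U^\bigstar_c$ is the class of connected monounary algebras satisfying ($\bigstar$). $Z=(\mathbb Z,k\mapsto k+1)$; for $n\in\mathbb N$, $\underline n=(\mathbb Z_n,k\mapsto k+1\bmod n)$; $E$ has universe $\mathbb Z\cup\{(k,1):k\in\mathbb N\}$ with $f(k)=k+1$ on $\mathbb Z$, $f((k,1))=(k-1,1)$ for $k>1$, $f((1,1))=0$; $\widehat n$ has universe $\mathbb Z_n\cup\{(k,1):k\in\mathbb N\}$ with $f(k)=k+1\bmod n$ on $\mathbb Z_n$, $f((k,1))=(k-1,1)$ for $k>1$, $f((1,1))=0$. $\mathcal S^{(0)}$ is the class of algebras isomorphic to $Z$, $E$, or to $\underline n$ or $\widehat n$ for some $n\in\mathbb N$; $\mathcal S^{(1)}$ is the class of $A\in\mathcal U^\bigstar_c$ for which there is $a\in A$ with $A'=\{a\}$ and the subalgebra $A\setminus P(a)$ in $\mathcal S^{(0)}$. *)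

(* Defs.v *)
From Stdlib Require Import ZArith.
From mathcomp Require Import all_boot.
Set Implicit Arguments.
Unset Strict Implicit.
Unset Printing Implicit Defensive.

(* A (total) monounary algebra: a carrier with a unary operation.
   Nonemptiness is imposed where the paper needs it (retracts, classes). *)
Record alg := Alg { carrier :> Type; act : carrier -> carrier }.
Arguments act {a} _.

Definition hom (A B : alg) (h : A -> B) : Prop :=
  forall x : A, h (act x) = act (h x).

Definition iso (A B : alg) : Prop :=
  exists (h : A -> B) (g : B -> A),
    hom h /\ hom g /\ (forall x, g (h x) = x) /\ (forall y, h (g y) = y).

Definition closed (A : alg) (M : A -> Prop) : Prop :=
  forall x, M x -> M (act x).

Definition sub_alg (A : alg) (M : A -> Prop) (Hc : closed M) : alg :=
  @Alg {x : A | M x} (fun x => exist _ (act (proj1_sig x)) (Hc _ (proj2_sig x))).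

Definition in_R (X Y : alg) : Prop :=
  exists (M : X -> Prop) (Hc : closed M),
    (exists x, M x) /\
    (exists h : X -> X, hom h /\ (forall x, M (h x)) /\ (forall x, M x -> h x = x)) /\
    iso Y (sub_alg Hc).

Definition prod_alg (I : Type) (F : I -> alg) : alg :=
  @Alg (forall i, F i) (fun g i => act (g i)).

Definition retract_variety (C : alg -> Prop) : Prop :=
  (forall X, C X -> inhabited X) /\
  (forall X Y, C X -> iso X Y -> C Y) /\
  (forall X Y, C X -> in_R X Y -> C Y) /\
  (forall (I : Type) (F : I -> alg), inhabited I -> (forall i, C (F i)) -> C (prod_alg F)).

Definition Vgen (K : alg -> Prop) (X : alg) : Prop :=
  forall C, retract_variety C -> (forall Y, K Y -> C Y) -> C X.

Definition V1 (A : alg) : alg -> Prop := Vgen (fun Y => Y = A).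
Definition V2 (B E : alg) : alg -> Prop := Vgen (fun Y => Y = B \/ Y = E).

Definition connected (A : alg) : Prop :=
  forall x y : A, exists m n, iter m act x = iter n act y.

Definition has_cycle (A : alg) : Prop :=
  exists (x : A) (k : nat), 1 <= k /\ iter k act x = x.

Definition P (A : alg) (x : A) (y : A) : Prop := exists n, iter n act y = x.

(* isomorphism of the partial monounary algebras P(x1) and P(x2)
   (f restricted to those y in P(x) with f(y) in P(x)) *)
Definition P_iso (A : alg) (x1 x2 : A) : Prop :=
  exists phi psi : A -> A,
    (forall y, P x1 y -> P x2 (phi y)) /\
    (forall y, P x2 y -> P x1 (psi y)) /\
    (forall y, P x1 y -> psi (phi y) = y) /\
    (forall y, P x2 y -> phi (psi y) = y) /\
    (forall y, P x1 y -> (P x1 (act y) <-> P x2 (act (phi y)))) /\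
    (forall y, P x1 y -> P x1 (act y) -> phi (act y) = act (phi y)) /\
    (forall y, P x2 y -> P x2 (act y) -> psi (act y) = act (psi y)).

Definition Ainf (A : alg) (x : A) : Prop :=
  exists s : nat -> A, s 0 = x /\ forall n, act (s n.+1) = s n.

Definition Aprime (A : alg) (x : A) : Prop := ~ Ainf x /\ Ainf (act x).

Definition star (A : alg) : Prop :=
  forall x1 x2 x3 : A, act x1 = act x2 -> act x2 = act x3 ->
    P_iso x1 x2 -> P_iso x1 x3 -> P_iso x2 x3 ->
    x1 = x2 \/ x1 = x3 \/ x2 = x3.

Definition U_star_c (A : alg) : Prop := connected A /\ star A.

Lemma compl_P_closed (A : alg) (a : A) : closed (fun y => ~ P a y).
Proof.
move=> y Hy [n Hn]; apply: Hy; exists n.+1; by rewrite iterSr.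
Qed.

Definition compl_alg (A : alg) (a : A) : alg := sub_alg (@compl_P_closed A a).

(* the algebras Z, E, n-cycles, hat n  (n = m.+1 >= 1) *)
Definition Zalg : alg := @Alg Z Z.succ.

(* (k,1), k >= 1, is encoded as inr (k-1) *)
Definition Ealg : alg :=
  @Alg (Z + nat)%type (fun x => match x with
                               | inl k => inl (Z.succ k)
                               | inr 0 => inl 0%Z
                               | inr (S k) => inr k
                               end).

Definition cyc (m : nat) : alg := @Alg 'I_m.+1 (@ordS m.+1).

Definition hat (m : nat) : alg :=
  @Alg ('I_m.+1 + nat)%type (fun x => match x with
                                     | inl i => inl (ordS i)
                                     | inr 0 => inl ord0
                                     | inr (S k) => inr k
                                     end).

Definition S0 (X : alg) : Prop :=
  iso X Zalg \/ iso X Ealg \/ exists m : nat, iso X (cyc m) \/ iso X (hat m).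

Definition S1 (X : alg) : Prop :=
  U_star_c X /\
  exists a : X, (forall x, Aprime x <-> x = a) /\ S0 (@compl_alg X a).

(* Main.v *)
From Pilot Require Import Defs.
From Stdlib Require Import ZArith Lia ClassicalEpsilon FunctionalExtensionality PropExtensionality ProofIrrelevance Classical.
From mathcomp Require Import all_boot zify.
Import Pilot.Defs.
Set Implicit Arguments. Unset Strict Implicit. Unset Printing Implicit Defensive.

Lemma acyc_inj (A:alg) (acyc: ~has_cycle A) (x:A) p q :
  iter p act x = iter q act x -> p = q.
Proof.
wlog: p q / p <= q.
  move=> W E; case: (leqP p q) => H; first exact: W.
  symmetry; apply: W; [exact: ltnW | by []].
move=> Hpq E; case: (ltngtP p q) => // Hlt; last lia.
exfalso; apply: acyc; exists (iter p act x), (q - p); split; first lia.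
by rewrite -iterD subnK.
Qed.

Lemma minimal_ex (Q : nat -> Prop) : (exists n, Q n) ->
  exists n, Q n /\ forall m, m < n -> ~ Q m.
Proof.
move=> [n Hn]; elim: n {-2}n (leqnn n) Hn => [|k IH] n Hn Qn.
  exists n; split=> // m Hm; lia.
case: (classic (exists m, m < n /\ Q m)) => [[m [Hm Qm]]|H].
  apply: (IH m) => //; lia.
exists n; split=> // m Hm Qm; apply: H; by exists m.
Qed.

Lemma minimal_uniq (Q : nat -> Prop) n m :
  Q n -> (forall k, k < n -> ~ Q k) -> Q m -> (forall k, k < m -> ~ Q k) -> n = m.
Proof.
move=> Qn Hn Qm Hm; case: (ltngtP n m) => // H; [by case: (Hm _ H)|by case: (Hn _ H)].
Qed.

Lemma sig_eq (T:Type) (Pr : T -> Prop) (x y : {z | Pr z}) : proj1_sig x = proj1_sig y -> x = y.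
Proof.
case: x => x px; case: y => y py /= E; subst y; f_equal; apply: proof_irrelevance.
Qed.

Lemma iter_sub (A:alg) (M : A -> Prop) (Hc : closed M) (x : sub_alg Hc) n :
  proj1_sig (iter n act x) = iter n act (proj1_sig x).
Proof. elim: n => //= n ->. by []. Qed.

Lemma iter_prod (I:Type) (F : I -> alg) (d : prod_alg F) n :
  iter n act d = (fun i => iter n act (d i)).
Proof.
elim: n => //= n ->. by [].
Qed.

Definition bisim (X:alg) (x y : X) : Prop :=
  exists R : X -> X -> Prop, R x y /\
   forall u v, R u v ->
     (forall u1, act u1 = u -> exists v1, act v1 = v /\ R u1 v1) /\
     (forall v1, act v1 = v -> exists u1, act u1 = u /\ R u1 v1).

Lemma bisim_refl (X:alg) (x:X) : bisim x x.
Proof.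
exists (fun u v => u = v); split=> // u v ->; split=> w Hw; by exists w.
Qed.

Lemma bisim_sym (X:alg) (x y:X) : bisim x y -> bisim y x.
Proof.
move=> [R [Rxy HR]]; exists (fun u v => R v u); split=> // u v Ruv.
have [H1 H2] := HR _ _ Ruv; split.
  move=> u1 E; have [w [Ew Rw]] := H2 _ E; by exists w.
move=> v1 E; have [w [Ew Rw]] := H1 _ E; by exists w.
Qed.

Lemma bisim_trans (X:alg) (x y z:X) : bisim x y -> bisim y z -> bisim x z.
Proof.
move=> [R [Rxy HR]] [Q [Qyz HQ]].
exists (fun u w => exists v, R u v /\ Q v w); split; first by exists y.
move=> u w [v [Ruv Qvw]]; have [H1 H2] := HR _ _ Ruv; have [G1 G2] := HQ _ _ Qvw; split.
  move=> u1 E; have [v1 [Ev1 R1]] := H1 _ E; have [w1 [Ew1 Q1]] := G1 _ Ev1.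
  exists w1; split=> //; by exists v1.
move=> w1 E; have [v1 [Ev1 Q1]] := G2 _ E; have [u1 [Eu1 R1]] := H2 _ Ev1.
exists u1; split=> //; by exists v1.
Qed.

Lemma bisim_child (X:alg) (x y u:X) : bisim x y -> act u = x ->
  exists v, act v = y /\ bisim u v.
Proof.
move=> [R [Rxy HR]] E; have [H1 _] := HR _ _ Rxy.
have [v [Ev Rv]] := H1 _ E; exists v; split=> //; exists R; by split.
Qed.

Lemma P_iso_bisim (X:alg) (acyc : ~ has_cycle X) (x1 x2 : X) : P_iso x1 x2 -> bisim x1 x2.
Proof.
move=> [phi [psi [H1 [H2 [H3 [H4 [H5 [H6 H7]]]]]]]].
have notP : forall x : X, ~ P x (act x).
  move=> x [n Hn]; apply: acyc; exists x, n.+1; split=> //; by rewrite iterSr.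
have Px : forall x : X, P x x by move=> x; exists 0.
have Pch : forall (x u u1 : X), P x u -> act u1 = u -> P x u1.
  move=> x u u1 [n Hn] E; exists n.+1; by rewrite iterSr E.
have phix : phi x1 = x2.
  have P2 := H1 _ (Px x1).
  have : ~ P x2 (act (phi x1)).
    move=> Q; apply: (notP x1); by apply/(H5 _ (Px x1)).
  case: P2 => [[|n] Hn] // N; exfalso; apply: N; exists n; by rewrite -iterSr.
exists (fun u v => P x1 u /\ v = phi u); split; first by split; [apply: Px|rewrite phix].
move=> u v [Pu ->]; split.
  move=> u1 E; have Pu1 := Pch _ _ _ Pu E.
  exists (phi u1); split; last by [].
  rewrite -E; symmetry; apply: H6 => //; by rewrite E.
move=> v1 E; have Pv : P x2 (phi u) := H1 _ Pu.
have Pv1 := Pch _ _ _ Pv E.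
have Pu1 := H2 _ Pv1.
have e1 : phi (psi v1) = v1 := H4 _ Pv1.
have Pa : P x1 (act (psi v1)).
  apply/(H5 _ Pu1); by rewrite e1 E.
exists (psi v1); split; last by split; last by rewrite e1.
have : phi (act (psi v1)) = phi u by rewrite H6 // e1 E.
move=> F; by rewrite -(H3 _ Pa) F H3.
Qed.
Lemma retract_of (X Y : alg) (e : Y -> X) (rho : X -> Y) (y0 : Y) :
  hom e -> hom rho -> (forall y, rho (e y) = y) -> in_R X Y.
Proof.
move=> He Hr Hre.
pose M := fun x : X => exists y, x = e y.
have Hc : Defs.closed M.
  move=> x [y ->]; exists (act y); by rewrite He.
exists M, Hc; split; first by exists (e y0), y0.
split.
  exists (fun x => e (rho x)); split; first by move=> x; rewrite Hr He.
  split; first by move=> x; exists (rho x).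
  by move=> x [y ->]; rewrite Hre.
exists (fun y => exist M (e y) (ex_intro _ y erefl) : sub_alg Hc).
exists (fun z : sub_alg Hc => rho (proj1_sig z)).
split; first by move=> y; apply: sig_eq => /=; rewrite He.
split; first by move=> [x Hx] /=; rewrite Hr.
split; first by move=> y /=; rewrite Hre.
move=> [x [y Hx]]; apply: sig_eq => /=; by rewrite Hx Hre.
Qed.

Lemma inh_rv : retract_variety (fun X : alg => inhabited X).
Proof.
split; first by [].
split; first by move=> X Y [x] [h [g _]]; exact: (inhabits (h x)).
split; first by move=> X Y _ [M [Hc [[x Mx] [_ [h [g _]]]]]]; exact: (inhabits (g (exist _ x Mx))).
move=> I F _ H.
have H' : forall i, exists x : F i, True by move=> i; case: (H i) => x; by exists x.
constructor; exact: (fun i => proj1_sig (constructive_indefinite_description _ (H' i))).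
Qed.
Lemma Vgen_rv (K : alg -> Prop) : (forall Y, K Y -> inhabited Y) -> retract_variety (Vgen K).
Proof.
move=> HK; split; first by move=> X HX; exact: (HX _ inh_rv HK).
split; first by move=> X Y HX Hi C HC HKC; apply: HC.2.1 (HX C HC HKC) Hi.
split; first by move=> X Y HX Hi C HC HKC; apply: HC.2.2.1 (HX C HC HKC) Hi.
move=> I F HI HF C HC HKC; apply: HC.2.2.2 => // i; exact: HF.
Qed.

Lemma V_equal (A B E : alg) : inhabited A -> inhabited B -> inhabited E ->
  V1 A B -> V1 A E -> V2 B E A -> forall X, V1 A X <-> V2 B E X.
Proof.
move=> iA iB iE HB HE HA X; split.
  move=> HX; apply: HX; first by apply: Vgen_rv => Y [->|->].
  by move=> Y ->.
move=> HX; apply: HX; first by apply: Vgen_rv => Y ->.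
by move=> Y [->|->].
Qed.

Lemma V1_R (A B : alg) : in_R A B -> V1 A B.
Proof. move=> H C HC HK; apply: HC.2.2.1 (HK A erefl) H. Qed.
Definition dep (A:alg) (p x : A) : nat :=
  epsilon (inhabits 0) (fun n => iter n act x = p).

Lemma dep_eq (A:alg) (acyc : ~has_cycle A) (p x : A) n :
  iter n act x = p -> dep p x = n.
Proof.
move=> H; have := epsilon_spec (inhabits 0) (fun n => iter n act x = p) (ex_intro _ n H).
rewrite -/(dep p x) -H; exact: acyc_inj.
Qed.

Lemma dep_spec (A:alg) (p x : A) : P p x -> iter (dep p x) act x = p.
Proof. move=> [n H]; exact: (epsilon_spec (inhabits 0) (fun n => iter n act x = p) (ex_intro _ n H)). Qed.

Lemma iter_act (A:alg) (x:A) n : iter n act (act x) = act (iter n act x).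
Proof. by elim: n => //= n ->. Qed.

Lemma Ainf_act (A:alg) (x:A) : Ainf x -> Ainf (act x).
Proof.
move=> [s [s0 Hs]]; exists (fun n => if n is k.+1 then s k else act x); split=> //.
by case=> [|n] /=; rewrite ?s0 ?Hs.
Qed.

Lemma Ainf_iter (A:alg) (x:A) n : Ainf x -> Ainf (iter n act x).
Proof. move=> H; elim: n => //= n IH; exact: Ainf_act. Qed.

Lemma Ainf_shift (A:alg) (s : nat -> A) : (forall n, act (s n.+1) = s n) -> forall n, Ainf (s n).
Proof. move=> Hs n; exists (fun k => s (k + n)); split=> // k; by rewrite addSn Hs. Qed.

Lemma chain_iter (A:alg) (s : nat -> A) : (forall n, act (s n.+1) = s n) ->
  forall n, iter n act (s n) = s 0.
Proof. move=> Hs; elim=> //= n IH; by rewrite -iterS iterSr Hs IH. Qed.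

Definition chain (A:alg) (x : A) : nat -> A :=
  epsilon (inhabits (fun _ => x)) (fun s => s 0 = x /\ forall n, act (s n.+1) = s n).

Lemma chain_spec (A:alg) (x:A) : Ainf x -> chain x 0 = x /\ forall n, act (chain x n.+1) = chain x n.
Proof. move=> H; exact: (epsilon_spec (inhabits (fun _ => x)) (fun s => s 0 = x /\ forall n, act (s n.+1) = s n) H). Qed.

Definition lvlpair (A:alg) (a:A) (x:A) : nat * nat :=
  epsilon (inhabits (0,0)) (fun mn => iter mn.1 act x = iter mn.2 act (act a)).
Definition lvl (A:alg) (a:A) (x:A) : Z :=
  (Z.of_nat (lvlpair a x).2 - Z.of_nat (lvlpair a x).1)%Z.

Lemma lvl_spec (A:alg) (a:A) (conn : connected A) (acyc : ~has_cycle A) (x:A) m n :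
  iter m act x = iter n act (act a) -> lvl a x = (Z.of_nat n - Z.of_nat m)%Z.
Proof.
move=> H.
have [[m' n'] E] : exists mn : nat * nat, iter mn.1 act x = iter mn.2 act (act a).
  have [m0 [n0 E]] := conn x (act a); by exists (m0, n0).
have := epsilon_spec (inhabits (0,0)) (fun mn : nat*nat => iter mn.1 act x = iter mn.2 act (act a)) (ex_intro _ (m',n') E).
rewrite /lvl -/(lvlpair a x); case: (lvlpair a x) => p q /= Hpq.
have : iter (p + n) act (act a) = iter (m + q) act (act a).
  by rewrite iterD -H -iterD addnC iterD Hpq -iterD.
move/(acyc_inj acyc); lia.
Qed.

Lemma lvl_iter (A:alg) (a:A) (conn : connected A) (acyc : ~has_cycle A) (x:A) k :
  lvl a (iter k act x) = (lvl a x + Z.of_nat k)%Z.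
Proof.
have [m [n E]] := conn x (act a).
rewrite (lvl_spec conn acyc E) (lvl_spec conn acyc (x:=iter k act x) (m:=m) (n:=n+k)); first lia.
by rewrite -iterD addnC iterD E -iterD addnC.
Qed.

Lemma lvl_act (A:alg) (a:A) (conn : connected A) (acyc : ~has_cycle A) (x:A) :
  lvl a (act x) = (lvl a x + 1)%Z.
Proof. exact: (@lvl_iter A a conn acyc x 1). Qed.

Lemma lvl_eq_iter (A:alg) (a:A) (conn : connected A) (acyc : ~has_cycle A) (x y:A) m n :
  iter m act x = iter n act y -> (lvl a x + Z.of_nat m = lvl a y + Z.of_nat n)%Z.
Proof. move=> E; by rewrite -!(lvl_iter _ conn acyc) E. Qed.

Definition line (A:alg) (base : A) (s : nat -> A) (z : Z) : A :=
  if (0 <=? z)%Z then iter (Z.to_nat z) act base else s (Z.to_nat (- z)).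

Lemma line_act (A:alg) (base : A) (s : nat -> A) : s 0 = base -> (forall n, act (s n.+1) = s n) ->
  forall z, line base s (z + 1) = act (line base s z).
Proof.
move=> s0 Hs z; rewrite /line.
case: (Z.leb_spec0 0 z) => Hz; case: (Z.leb_spec0 0 (z+1)) => Hz1; try lia.
  have -> : Z.to_nat (z+1) = (Z.to_nat z).+1 by lia. by [].
  have -> : z = (-1)%Z by lia. by rewrite /= -s0 -Hs.
have -> : Z.to_nat (- z) = (Z.to_nat (- (z + 1))).+1 by lia.
by rewrite Hs.
Qed.

Lemma lvl_line (A:alg) (a:A) (conn : connected A) (acyc : ~has_cycle A) (base : A) (s : nat -> A) :
  s 0 = base -> (forall n, act (s n.+1) = s n) ->
  forall z, lvl a (line base s z) = (lvl a base + z)%Z.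
Proof.
move=> s0 Hs z; rewrite /line; case: (Z.leb_spec0 0 z) => Hz.
  rewrite lvl_iter //; lia.
have := lvl_eq_iter a conn acyc (m := Z.to_nat (- z)) (n := 0) (x := s (Z.to_nat (-z))) (y := base).
rewrite chain_iter // s0 => /(_ erefl); lia.
Qed.
Lemma P_refl (A:alg) (x:A) : P x x.
Proof. by exists 0. Qed.

Lemma notP_act_self (A:alg) (acyc : ~has_cycle A) (x:A) : ~ P x (act x).
Proof. move=> [n Hn]; apply: acyc; exists x, n.+1; split=> //; by rewrite iterSr. Qed.

Lemma P_act (A:alg) (p x:A) : P p x -> x <> p -> P p (act x).
Proof. move=> [[|n] Hn] //= N; exists n; by rewrite -iterSr. Qed.

Lemma P_child (A:alg) (p x y:A) : P p x -> act y = x -> P p y.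
Proof. move=> [n Hn] E; exists n.+1; by rewrite iterSr E. Qed.

Lemma P_iter (A:alg) (p x:A) n : iter n act x = p -> P p x.
Proof. by exists n. Qed.

Lemma Ainf_fa (A:alg) (a:A) (apr : forall x : A, Aprime x <-> x = a) : Ainf (act a).
Proof. by have [_ H] := (proj2 (apr a) erefl). Qed.

Lemma Ainf_notP (A:alg) (a:A) (apr : forall x : A, Aprime x <-> x = a) (x:A) : Ainf x -> ~ P a x.
Proof.
move=> H [n Hn]; have [N _] := (proj2 (apr a) erefl); apply: N; rewrite -Hn; exact: Ainf_iter.
Qed.

Lemma notP_Ainf (A:alg) (a:A) (conn : connected A) (apr : forall x : A, Aprime x <-> x = a) (x:A) :
  ~ P a x -> Ainf x.
Proof.
move=> NP; have [m [n E]] := conn x a.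
have Q : exists k, Ainf (iter k act x).
  case: n E => [|n] E; first by case: NP; exists m.
  exists m; rewrite E /= -iter_act; apply: Ainf_iter; exact: Ainf_fa.
have [[|k] [Hk Hmin]] := minimal_ex Q => //.
case: (classic (Ainf (iter k act x))) => H; first by case: (Hmin k).
have : Aprime (iter k act x) by split.
move/apr => E1; case: NP; by exists k.
Qed.

Definition Lz (A:alg) (a:A) (k : Z) : A := line (act a) (chain (act a)) k.


Lemma Lz_act (A:alg) (a:A) (apr : forall x : A, Aprime x <-> x = a) k :
  Lz a (k + 1) = act (Lz a k).
Proof. have [H1 H2] := chain_spec (Ainf_fa apr); exact: line_act. Qed.

Lemma lvl_fa (A:alg) (a:A) (conn : connected A) (acyc : ~has_cycle A) : lvl a (act a) = 0%Z.
Proof. by rewrite (@lvl_spec A a conn acyc (act a) 0 0). Qed.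

Lemma lvl_Lz (A:alg) (a:A) (conn : connected A) (acyc : ~has_cycle A) (apr : forall x : A, Aprime x <-> x = a) k :
  lvl a (Lz a k) = k.
Proof.
have [H1 H2] := chain_spec (Ainf_fa apr).
rewrite /Lz lvl_line // lvl_fa //.
Qed.

Lemma Lz_Ainf (A:alg) (a:A) (apr : forall x : A, Aprime x <-> x = a) k : Ainf (Lz a k).
Proof.
have [H1 H2] := chain_spec (Ainf_fa apr).
rewrite /Lz /line; case: (0 <=? k)%Z.
  apply: Ainf_iter; exact: Ainf_fa.
exact: Ainf_shift.
Qed.

Lemma Lz_notP (A:alg) (a:A) (apr : forall x : A, Aprime x <-> x = a) k : ~ P a (Lz a k).
Proof. apply: Ainf_notP => //; exact: Lz_Ainf. Qed.
Definition rep (A:alg) (a:A) (x:A) : A :=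
  epsilon (inhabits a) (fun u => act u = act x /\ bisim u x).

Lemma rep_spec (A:alg) (a x:A) : act (rep a x) = act x /\ bisim (rep a x) x.
Proof.
exact: (epsilon_spec (inhabits a) (fun u => act u = act x /\ bisim u x) (ex_intro _ x (conj erefl (bisim_refl x)))).
Qed.

Lemma rep_congr (A:alg) (a x y:A) : act x = act y -> bisim x y -> rep a x = rep a y.
Proof.
move=> E B; rewrite /rep; f_equal; apply: functional_extensionality => u.
apply: propositional_extensionality; split=> [[E1 B1]|[E1 B1]]; split.
- by rewrite E1.
- exact: bisim_trans B1 B.
- by rewrite E1.
- exact: bisim_trans B1 (bisim_sym B).
Qed.

Lemma rep_idem (A:alg) (a x:A) : rep a (rep a x) = rep a x.
Proof. have [E B] := rep_spec a x; exact: rep_congr. Qed.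

Definition InS (A:alg) (a:A) (x:A) : Prop :=
  P a x /\ forall k, k < dep a x -> rep a (iter k act x) = iter k act x.

Fixpoint Hn (A:alg) (a:A) (n : nat) (y : A) : A :=
  match n with
  | 0 => a
  | m.+1 => rep a (epsilon (inhabits a) (fun u => act u = Hn a m (act y) /\ bisim y u))
  end.

Lemma InS_act (A:alg) (a:A) (acyc : ~has_cycle A) (x:A) : InS a x -> x <> a -> InS a (act x).
Proof.
move=> [Px Hx] N; have Pfx := P_act Px N.
have D := dep_spec Px; have D' := dep_spec Pfx.
have E : dep a x = (dep a (act x)).+1.
  apply: dep_eq => //; by rewrite iterSr.
split=> // k Hk; rewrite -iterSr; apply: Hx; lia.
Qed.

Lemma Hn_spec (A:alg) (a:A) (acyc : ~has_cycle A) n : forall y : A, iter n act y = a ->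
  [/\ bisim y (Hn a n y), InS a (Hn a n y), iter n act (Hn a n y) = a,
      (InS a y -> Hn a n y = y) & (forall m, n = m.+1 -> act (Hn a n y) = Hn a m (act y))].
Proof.
elim: n => [|n IH] y Hy.
  rewrite /= in Hy; subst y; split=> //.
  - exact: bisim_refl.
  - split; first exact: P_refl.
    move=> k; rewrite (@dep_eq A acyc a a 0) //.
have Hy' : iter n act (act y) = a by rewrite -iterSr.
have [B1 S1 I1 F1 _] := IH _ Hy'.
have ex : exists u, act u = Hn a n (act y) /\ bisim y u.
  have [v [Ev Bv]] := bisim_child B1 (erefl (act y)); by exists v.
have [Eu Bu] := epsilon_spec (inhabits a) (fun u => act u = Hn a n (act y) /\ bisim y u) ex.
set u0 := epsilon _ _ in Eu Bu.
have [Er Br] := rep_spec a u0.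
have Hsimpl : Hn a n.+1 y = rep a u0 by [].
rewrite Hsimpl.
have It : iter n.+1 act (rep a u0) = a by rewrite iterSr Er Eu.
split.
- exact: bisim_trans Bu (bisim_sym Br).
- split; first exact: P_iter It.
  rewrite (dep_eq acyc It) => k Hk.
  case: k Hk => [|k] Hk; first by rewrite /= rep_idem.
  rewrite iterSr Er Eu; apply: S1.2; rewrite (dep_eq acyc I1); lia.
- exact: It.
- move=> Sy.
  have Sy' : InS a (act y).
    apply: InS_act => // E; subst y; apply: (notP_act_self acyc (P_iter Hy')).
  rewrite (F1 Sy') in Eu.
  rewrite (rep_congr a (x:=u0) (y:=y)) //; last exact: bisim_sym.
  have := Sy.2 0; rewrite /=; apply; rewrite (dep_eq acyc Hy); lia.
- move=> m [<-]; by rewrite Er Eu.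
Qed.
Definition hA (A:alg) (a:A) (x:A) : A :=
  if excluded_middle_informative (P a x) then Hn a (dep a x) x else Lz a (lvl a x).

Definition Mset (A:alg) (a:A) (x:A) : Prop := InS a x \/ exists k, x = Lz a k.

Lemma Lz0 (A:alg) (a:A) : Lz a 0 = act a.
Proof. by []. Qed.

Lemma Mset_closed (A:alg) (a:A) (acyc : ~has_cycle A) (apr : forall x : A, Aprime x <-> x = a) :
  Defs.closed (Mset a).
Proof.
move=> x [Sx|[k ->]].
  case: (classic (x = a)) => [->|N]; first by right; exists 0%Z.
  left; exact: InS_act.
right; exists (k+1)%Z; by rewrite Lz_act.
Qed.

Lemma hA_P (A:alg) (a:A) (acyc : ~has_cycle A) (x:A) : P a x ->
  hA a x = Hn a (dep a x) x.
Proof. move=> Px; rewrite /hA; by case: excluded_middle_informative. Qed.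

Lemma hA_nP (A:alg) (a:A) (x:A) : ~ P a x -> hA a x = Lz a (lvl a x).
Proof. move=> Px; rewrite /hA; by case: excluded_middle_informative. Qed.

Lemma hA_hom (A:alg) (a:A) (conn : connected A) (acyc : ~has_cycle A) (apr : forall x : A, Aprime x <-> x = a) :
  hom (hA a).
Proof.
move=> x; case: (classic (P a x)) => Px.
  rewrite (hA_P acyc Px); have D := dep_spec Px.
  case E: (dep a x) D => [|n] D.
    rewrite /= in D; subst x; rewrite hA_nP; last exact: notP_act_self.
    by rewrite lvl_fa.
  have Pfx : P a (act x) by exists n; rewrite -iterSr.
  rewrite (hA_P acyc Pfx) (dep_eq acyc (x:=act x) (n:=n)); last by rewrite -iterSr.
  have [_ _ _ _ F] := Hn_spec acyc D; by rewrite (F n).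
have Pfx : ~ P a (act x) by move=> H; apply: Px; apply: P_child H erefl.
rewrite !hA_nP // lvl_act //; exact: Lz_act.
Qed.

Lemma hA_M (A:alg) (a:A) (acyc : ~has_cycle A) (x:A) : Mset a (hA a x).
Proof.
case: (classic (P a x)) => Px.
  rewrite (hA_P acyc Px); left; have [_ ? _ _ _] := Hn_spec acyc (dep_spec Px); done.
rewrite hA_nP //; right; by eexists.
Qed.

Lemma hA_fix (A:alg) (a:A) (conn : connected A) (acyc : ~has_cycle A) (apr : forall x : A, Aprime x <-> x = a) (x:A) :
  Mset a x -> hA a x = x.
Proof.
move=> [Sx|[k ->]].
  rewrite (hA_P acyc Sx.1); have [_ _ _ F _] := Hn_spec acyc (dep_spec Sx.1); exact: F.
by rewrite hA_nP ?lvl_Lz //; exact: Lz_notP.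
Qed.

Lemma hA_bisim (A:alg) (a:A) (acyc : ~has_cycle A) (x:A) : P a x -> bisim x (hA a x).
Proof.
move=> Px; rewrite (hA_P acyc Px); have [? _ _ _ _] := Hn_spec acyc (dep_spec Px); done.
Qed.
Definition Bt (A:alg) (a:A) (acyc : ~has_cycle A) (apr : forall x : A, Aprime x <-> x = a) : alg :=
  sub_alg (Mset_closed acyc apr).

Lemma InS_a (A:alg) (a:A) (acyc : ~has_cycle A) : InS a a.
Proof. split; first exact: P_refl. move=> k; by rewrite (@dep_eq A acyc a a 0). Qed.

Definition aB (A:alg) (a:A) (acyc : ~has_cycle A) (apr : forall x : A, Aprime x <-> x = a) : Bt acyc apr :=
  exist _ a (or_introl (@InS_a A a acyc)).

Lemma hA_InS (A:alg) (a:A) (acyc : ~has_cycle A) (x:A) : P a x -> InS a (hA a x).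
Proof. move=> Px; rewrite (hA_P acyc Px); have [_ ? _ _ _] := Hn_spec acyc (dep_spec Px); done. Qed.

Lemma B_in_R (A:alg) (a:A) (conn : connected A) (acyc : ~has_cycle A) (apr : forall x : A, Aprime x <-> x = a) :
  in_R A (Bt acyc apr).
Proof.
refine (@retract_of A (Bt acyc apr) (fun y : Bt acyc apr => proj1_sig y) (fun x => exist _ (hA a x) (@hA_M A a acyc x) : Bt acyc apr) (aB acyc apr) _ _ _).
- by [].
- move=> x; apply: sig_eq => /=; exact: hA_hom.
- move=> [x Mx]; apply: sig_eq => /=; exact: hA_fix.
Qed.

Lemma B_acyc (A:alg) (a:A) (acyc : ~has_cycle A) (apr : forall x : A, Aprime x <-> x = a) :
  ~ has_cycle (Bt acyc apr).
Proof.
move=> [x [k [Hk E]]]; apply acyc; exists (proj1_sig x), k; split=> //.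
by rewrite -iter_sub E.
Qed.

Lemma B_conn (A:alg) (a:A) (conn : connected A) (acyc : ~has_cycle A) (apr : forall x : A, Aprime x <-> x = a) :
  connected (Bt acyc apr).
Proof.
move=> x y; have [m [n E]] := conn (proj1_sig x) (proj1_sig y); exists m, n.
apply: sig_eq; by rewrite !iter_sub.
Qed.

Lemma B_P (A:alg) (a:A) (acyc : ~has_cycle A) (apr : forall x : A, Aprime x <-> x = a) (y : Bt acyc apr) :
  P (aB acyc apr) y <-> P a (proj1_sig y).
Proof.
split=> [[n Hn]|[n Hn]]; exists n.
  by rewrite -iter_sub Hn.
apply: sig_eq; by rewrite iter_sub.
Qed.

Lemma B_Ainf (A:alg) (a:A) (conn : connected A) (acyc : ~has_cycle A) (apr : forall x : A, Aprime x <-> x = a) (x : Bt acyc apr) :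
  Ainf x <-> exists k, proj1_sig x = Lz a k.
Proof.
split.
  move=> [s [s0 Hs]].
  have HA : Ainf (proj1_sig x).
    exists (fun n => proj1_sig (s n)); split; first by rewrite s0.
    move=> n; by rewrite -(Hs n).
  case: x s0 HA => x [Sx|[k Ek]] s0 HA /=; last by exists k.
  case: (Ainf_notP apr HA Sx.1).
move=> [k Ek].
have Mk : forall j, Mset a (Lz a j) by move=> j; right; exists j.
exists (fun n => exist _ (Lz a (k - Z.of_nat n)) (Mk _) : Bt acyc apr); split.
  apply: sig_eq => /=; by rewrite Ek Z.sub_0_r.
move=> n; apply: sig_eq => /=; rewrite -Lz_act //; f_equal; lia.
Qed.

Lemma B_aprime (A:alg) (a:A) (conn : connected A) (acyc : ~has_cycle A) (apr : forall x : A, Aprime x <-> x = a) (x : Bt acyc apr) :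
  Aprime x <-> x = aB acyc apr.
Proof.
split.
  move=> [N1 N2]; move/(B_Ainf conn) : N2 => [k Ek].
  apply: sig_eq => /=.
  case: x N1 Ek => x [Sx|[j Ej]] N1 Ek /=.
    apply: NNPP => N; apply: (Lz_notP apr (k := k)); rewrite -Ek /=; exact: P_act Sx.1 N.
  case: N1; apply/(B_Ainf conn); by exists j.
move=> ->; split.
  move/(B_Ainf conn) => [k /= Ek]; apply: (Lz_notP apr (k:=k)); rewrite -Ek; exact: P_refl.
apply/(B_Ainf conn); exists 0%Z; by [].
Qed.
Lemma B_bisimA (A:alg) (a:A) (conn : connected A) (acyc : ~has_cycle A) (apr : forall x : A, Aprime x <-> x = a)
  (u' v' : Bt acyc apr) : InS a (proj1_sig u') -> InS a (proj1_sig v') -> bisim u' v' ->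
  bisim (proj1_sig u') (proj1_sig v').
Proof.
move=> Su Sv Buv.
pose R := fun u v : A => exists u' v' : Bt acyc apr, [/\ InS a (proj1_sig u'), InS a (proj1_sig v'),
   bisim u (proj1_sig u'), bisim u' v' & bisim v (proj1_sig v')].
have Rsym : forall u v, R u v -> R v u.
  move=> u v [x [y [H1 H2 H3 H4 H5]]]; exists y, x; split=> //; exact: bisim_sym.
have forth : forall u v, R u v -> forall u1, act u1 = u -> exists v1, act v1 = v /\ R u1 v1.
  move=> u v [x [y [Sx Sy Bux Bxy Bvy]]] u1 E.
  have [c [Ec Bc]] := bisim_child Bux E.
  have Pc : P a c := P_child Sx.1 Ec.
  have Ehc : act (hA a c) = proj1_sig x.
    by rewrite -hA_hom // Ec hA_fix //; left.
  pose c' := exist _ (hA a c) (@hA_M A a acyc c) : Bt acyc apr.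
  have Ec' : act c' = x by apply: sig_eq.
  have [d [Ed Bd]] := bisim_child Bxy Ec'.
  have Sd : InS a (proj1_sig d).
    case: d Ed Bd => d [Sd|[j Ej]] Ed Bd //=.
    exfalso; apply: (Lz_notP apr (k := (j+1)%Z)); rewrite Lz_act // -Ej.
    have -> : act d = proj1_sig y by rewrite -Ed.
    exact: Sy.1.
  have Ed' : act (proj1_sig d) = proj1_sig y by rewrite -Ed.
  have [e [Ee Be]] := bisim_child (bisim_sym Bvy) Ed'.
  exists e; split=> //; exists c', d; split=> //.
  - exact: hA_InS.
  - exact: bisim_trans Bc (hA_bisim acyc Pc).
  - exact: bisim_sym.
exists R; split; first by exists u', v'; split=> //; apply: bisim_refl.
move=> u v Ruv; split; first exact: forth.
move=> v1 E; have [u1 [E1 R1]] := forth _ _ (Rsym _ _ Ruv) _ E; exists u1; split=> //; exact: Rsym.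
Qed.

Lemma B_star (A:alg) (a:A) (conn : connected A) (acyc : ~has_cycle A) (apr : forall x : A, Aprime x <-> x = a) :
  star (Bt acyc apr).
Proof.
move=> x1 x2 x3 E12 E23 I12 I13 I23.
case: (classic (exists k, act (proj1_sig x1) = Lz a k)) => [[k Ek]|NL].
{   have two : forall x : Bt acyc apr, act (proj1_sig x) = Lz a k -> proj1_sig x = a \/ proj1_sig x = Lz a (k-1).
    move=> [x [Sx|[j Ej]]] /= Ex.
      left; apply: NNPP => N; apply: (Lz_notP apr (k:=k)); rewrite -Ex; exact: P_act Sx.1 N.
    right; rewrite Ej; f_equal.
    have := lvl_Lz conn acyc apr (j+1); rewrite Lz_act // -Ej Ex lvl_Lz //; lia.
  have E2 : act (proj1_sig x2) = Lz a k by (rewrite -Ek; change (proj1_sig (act x2) = proj1_sig (act x1)); rewrite E12).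
  have E3 : act (proj1_sig x3) = Lz a k by (rewrite -Ek; change (proj1_sig (act x3) = proj1_sig (act x1)); rewrite E12 E23).
  case: (two _ Ek) => H1; case: (two _ E2) => H2; case: (two _ E3) => H3.
  all: try (left; apply: (@sig_eq A (Mset a)); by rewrite H1 H2).
  all: try (right; left; apply: (@sig_eq A (Mset a)); by rewrite H1 H3).
  all: (right; right; apply: (@sig_eq A (Mset a)); by rewrite H2 H3). }
left.
have inS : forall x : Bt acyc apr, act x = act x1 -> InS a (proj1_sig x) /\ proj1_sig x <> a.
  move=> [x [Sx|[j Ej]]] Ex /=.
    split=> // Ea; apply: NL; exists 0%Z; rewrite Lz0.
    have -> : act (proj1_sig x1) = act x by (change (proj1_sig (act x1) = act x); rewrite -Ex).
    by rewrite Ea.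
  exfalso; apply: NL; exists (j+1)%Z; rewrite Lz_act // -Ej; change (proj1_sig (act x1) = act x).
  by rewrite -Ex.
have [S1 N1] := inS x1 erefl.
have [S2 N2] := inS x2 (esym E12).
have B12 := B_bisimA conn S1 S2 (P_iso_bisim (@B_acyc A a acyc apr) I12).
have Ea : act (proj1_sig x1) = act (proj1_sig x2) by (change (proj1_sig (act x1) = proj1_sig (act x2)); rewrite E12).
have Rr := rep_congr a Ea B12.
have fix1 : forall x, InS a x -> x <> a -> rep a x = x.
  move=> x Sx Nx; have := Sx.2 0; apply; case: (dep a x) (dep_spec Sx.1) => //= D; by case: Nx.
apply: sig_eq; by rewrite -(fix1 _ S1 N1) -(fix1 _ S2 N2) Rr.
Qed.
Lemma B_compl (A:alg) (a:A) (conn : connected A) (acyc : ~has_cycle A) (apr : forall x : A, Aprime x <-> x = a) :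
  iso (@compl_alg (Bt acyc apr) (aB acyc apr)) Zalg.
Proof.
have ML : forall k, Mset a (Lz a k) by move=> k; right; exists k.
pose bL := fun k => exist _ (Lz a k) (ML k) : Bt acyc apr.
have NL : forall k, ~ P (aB acyc apr) (bL k).
  move=> k /B_P /= H; exact: (Lz_notP apr H).
exists (fun y : @compl_alg (Bt acyc apr) (aB acyc apr) => lvl a (proj1_sig (proj1_sig y)) : Zalg).
exists (fun k : Zalg => exist _ (bL k) (NL k) : @compl_alg (Bt acyc apr) (aB acyc apr)).
split; first by move=> y /=; rewrite lvl_act.
split; first by move=> k; apply: sig_eq; apply: sig_eq => /=; rewrite -Lz_act.
split.
  move=> [[x Mx] Nx]; apply: sig_eq; apply: sig_eq => /=.
  case: Mx Nx => [Sx|[k Ek]] Nx.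
    case: Nx; apply/B_P => /=; exact: Sx.1.
  by rewrite Ek lvl_Lz.
move=> k /=; exact: lvl_Lz.
Qed.

Lemma B_S1 (A:alg) (a:A) (conn : connected A) (acyc : ~has_cycle A) (apr : forall x : A, Aprime x <-> x = a) :
  S1 (Bt acyc apr).
Proof.
split; first split.
- exact: B_conn.
- exact: B_star.
exists (aB acyc apr); split; first exact: B_aprime.
left; exact: B_compl.
Qed.
Definition kmap (A:alg) (a:A) (j x : A) : Ealg :=
  if excluded_middle_informative (P j x) then inr (dep j x) else inl (lvl a x - lvl a j - 1)%Z.

Lemma kmap_hom (A:alg) (a:A) (conn : connected A) (acyc : ~has_cycle A) (j : A) : hom (kmap a j).
Proof.
move=> x; rewrite /kmap.
case: (excluded_middle_informative (P j x)) => Px.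
  have D := dep_spec Px; case E: (dep j x) D => [|n] D.
    rewrite /= in D; subst j.
    case: (excluded_middle_informative (P x (act x))) => Pa; first by case: (notP_act_self acyc Pa).
    rewrite lvl_act // /=; f_equal; lia.
  have Pfx : P j (act x) by exists n; rewrite -iterSr.
  destruct (excluded_middle_informative (P j (act x))) as [Hh|NN]; last by case: NN.
  rewrite /= (dep_eq acyc (x:=act x) (n:=n)) //; by rewrite iter_act -iterS.
case: (excluded_middle_informative (P j (act x))) => Pfx; first by case: Px; exact: P_child Pfx erefl.
rewrite lvl_act //=; f_equal; rewrite /Z.succ; lia.
Qed.

Lemma kmap_P (A:alg) (a:A) (acyc : ~has_cycle A) (j x : A) n : iter n act x = j -> kmap a j x = inr n.
Proof.
move=> H; rewrite /kmap; case: excluded_middle_informative => Px; last by case: Px; exists n.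
by rewrite (dep_eq acyc H).
Qed.

Lemma kmap_nP (A:alg) (a:A) (j x : A) : ~ P j x -> kmap a j x = inl (lvl a x - lvl a j - 1)%Z.
Proof. move=> H; rewrite /kmap; by case: excluded_middle_informative. Qed.

Lemma kmap_inj (A:alg) (a:A) (acyc : ~has_cycle A) (x y : A) : kmap a x y = inr 0 -> y = x.
Proof.
rewrite /kmap; case: excluded_middle_informative => // Px [E].
have := dep_spec Px; by rewrite E.
Qed.

Lemma Ainf_same_lvl (A:alg) (a:A) (conn : connected A) (acyc : ~has_cycle A)
  (H : forall u v : A, act u = act v -> Ainf u -> Ainf v -> u = v) (x y : A) :
  Ainf x -> Ainf y -> lvl a x = lvl a y -> x = y.
Proof.
move=> Ix Iy Exy; have [m [n E]] := conn x y.
have := lvl_eq_iter a conn acyc E; rewrite Exy => Emn.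
have Enm : n = m by lia.
subst n; have Q : exists k, iter k act x = iter k act y by exists m.
have [[|i] [Hi Hmin]] := minimal_ex Q => //.
exfalso; apply: (Hmin i) => //; apply: H; [by [] | exact: Ainf_iter | exact: Ainf_iter].
Qed.

Lemma branching (A:alg) (a:A) (conn : connected A) (acyc : ~has_cycle A) (apr : forall x : A, Aprime x <-> x = a) :
  ~ iso (@compl_alg A a) Zalg ->
  exists u v : A, [/\ u <> v, act u = act v, Ainf u & Ainf v].
Proof.
move=> NI; apply: NNPP => NB.
have H : forall u v : A, act u = act v -> Ainf u -> Ainf v -> u = v.
  move=> u v E Iu Iv; apply: NNPP => N; apply: NB; by exists u, v.
apply: NI.
exists (fun y : @compl_alg A a => lvl a (proj1_sig y) : Zalg).
exists (fun k : Zalg => exist _ (Lz a k) (Lz_notP apr (k:=k)) : @compl_alg A a).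
split; first by move=> y /=; rewrite lvl_act.
split; first by move=> k; apply: sig_eq => /=; rewrite -Lz_act.
split.
  move=> [x Nx]; apply: sig_eq => /=.
  apply: (@Ainf_same_lvl A a conn acyc H); [exact: Lz_Ainf | exact: notP_Ainf | by rewrite lvl_Lz].
move=> k /=; exact: lvl_Lz.
Qed.

Lemma E_in_R (A:alg) (a:A) (conn : connected A) (acyc : ~has_cycle A) (apr : forall x : A, Aprime x <-> x = a) :
  ~ iso (@compl_alg A a) Zalg -> in_R A Ealg.
Proof.
move=> NI; have [u [v [Nuv Euv Iu Iv]]] := branching conn acyc apr NI.
pose c := act u.
have [cu0 cu] := chain_spec Iu; have [cv0 cv] := chain_spec Iv.
pose sU := fun n => match n with 0 => c | n'.+1 => chain u n' end.
have sU0 : sU 0 = c by [].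
have sUs : forall n, act (sU n.+1) = sU n by case=> [|n] /=; rewrite ?cu0 ?cu.
pose eE := fun y : Ealg => match y with inl z => line c sU z | inr n => chain v n end.
have lvc : lvl a v = (lvl a c - 1)%Z by rewrite /c Euv lvl_act //; lia.
apply: (@retract_of A Ealg eE (kmap a v) (inl 0%Z)).
- case=> [z|[|n]] /=.
  + by rewrite /Z.succ line_act.
  + by rewrite cv0 -Euv.
  + by rewrite cv.
- exact: kmap_hom.
- case=> [z|n] /=; last by apply: kmap_P => //; rewrite chain_iter // cv0.
  have NP : ~ P v (line c sU z).
    move=> [m Hm]; have := lvl_eq_iter a conn acyc (n:=0) Hm; rewrite lvl_line // lvc => El.
    move: Hm; rewrite /line; case: (Z.leb_spec0 0 z) => Hz; first lia.
    have -> : Z.to_nat (- z) = (Z.to_nat (- z) - 1).+1 by lia.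
    rewrite /= => Hm.
    have Hu := chain_iter cu (Z.to_nat (- z) - 1); rewrite cu0 in Hu.
    have Em : m = Z.to_nat (- z) - 1 by lia.
    rewrite Em in Hm.
    apply: Nuv; by rewrite -Hu Hm.
  rewrite kmap_nP // lvl_line // lvc; f_equal; lia.
Qed.
Fixpoint Psin (A:alg) (p q : A) (n : nat) (z : A) : A :=
  match n with
  | 0 => q
  | m.+1 => epsilon (inhabits q) (fun u => act u = Psin p q m (act z) /\ bisim z u)
  end.

Definition Psi (A:alg) (p q : A) (z : A) : A := Psin p q (dep p z) z.

Lemma Psin_spec (A:alg) (p q : A) (Bpq : bisim p q) n : forall z, iter n act z = p ->
  bisim z (Psin p q n z) /\ forall m, n = m.+1 -> act (Psin p q n z) = Psin p q m (act z).
Proof.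
elim: n => [|n IH] z Hz.
  rewrite /= in Hz; subst z; by split.
have Hz' : iter n act (act z) = p by rewrite -iterSr.
have [B1 _] := IH _ Hz'.
have ex : exists u, act u = Psin p q n (act z) /\ bisim z u.
  have [v [Ev Bv]] := bisim_child B1 (erefl (act z)); by exists v.
have [Eu Bu] := epsilon_spec (inhabits q) (fun u => act u = Psin p q n (act z) /\ bisim z u) ex.
split=> // m [<-]; exact: Eu.
Qed.

Lemma Psi_base (A:alg) (acyc : ~has_cycle A) (p q : A) : Psi p q p = q.
Proof. by rewrite /Psi (@dep_eq A acyc p p 0). Qed.

Lemma Psi_act (A:alg) (acyc : ~has_cycle A) (p q : A) (Bpq : bisim p q) (z : A) n :
  iter n.+1 act z = p -> Psi p q (act z) = act (Psi p q z).
Proof.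
move=> H; have H' : iter n act (act z) = p by rewrite -iterSr.
rewrite /Psi (dep_eq acyc H) (dep_eq acyc H').
have [_ F] := Psin_spec Bpq H; by rewrite (F n).
Qed.
Definition FD (A:alg) (a:A) (acyc : ~has_cycle A) (apr : forall x : A, Aprime x <-> x = a) (i : option A) : alg :=
  match i with None => Bt acyc apr | Some _ => Ealg end.

Definition gD (A:alg) (a:A) (acyc : ~has_cycle A) (apr : forall x : A, Aprime x <-> x = a) (x : A) :
  prod_alg (FD acyc apr) :=
  fun i => match i as i0 return FD acyc apr i0 with
           | None => exist _ (hA a x) (@hA_M A a acyc x)
           | Some j => kmap a j x end.

Lemma gD_hom (A:alg) (a:A) (conn : connected A) (acyc : ~has_cycle A) (apr : forall x : A, Aprime x <-> x = a) :
  hom (@gD A a acyc apr).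
Proof.
move=> x; apply: functional_extensionality_dep => -[j|] /=.
  exact: kmap_hom.
apply: sig_eq => /=; exact: hA_hom.
Qed.

Lemma gD_inj (A:alg) (a:A) (acyc : ~has_cycle A) (apr : forall x : A, Aprime x <-> x = a) (x y : A) :
  gD acyc apr x = gD acyc apr y -> x = y.
Proof.
move=> E; have := f_equal (fun d => d (Some x)) E => /= E'.
symmetry; apply: (kmap_inj (a:=a) acyc); rewrite -E'; exact: (@kmap_P A a acyc x x 0).
Qed.

Lemma gD_None (A:alg) (a:A) (acyc : ~has_cycle A) (apr : forall x : A, Aprime x <-> x = a) (x : A) :
  proj1_sig (gD acyc apr x None : Bt acyc apr) = hA a x.
Proof. by []. Qed.
Definition inG (A:alg) (a:A) (acyc : ~has_cycle A) (apr : forall x : A, Aprime x <-> x = a)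
  (d : prod_alg (FD acyc apr)) : Prop := exists x, gD acyc apr x = d.
Definition ginv (A:alg) (a:A) (acyc : ~has_cycle A) (apr : forall x : A, Aprime x <-> x = a)
  (d : prod_alg (FD acyc apr)) : A := epsilon (inhabits a) (fun x => gD acyc apr x = d).
Definition entry (A:alg) (a:A) (acyc : ~has_cycle A) (apr : forall x : A, Aprime x <-> x = a)
  (d : prod_alg (FD acyc apr)) : Prop := exists n, inG (iter n act d).
Definition Qe (A:alg) (a:A) (acyc : ~has_cycle A) (apr : forall x : A, Aprime x <-> x = a)
  (d : prod_alg (FD acyc apr)) (n : nat) : Prop :=
  inG (iter n act d) /\ forall m, m < n -> ~ inG (iter m act d).
Definition Nd (A:alg) (a:A) (acyc : ~has_cycle A) (apr : forall x : A, Aprime x <-> x = a)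
  (d : prod_alg (FD acyc apr)) : nat := epsilon (inhabits 0) (Qe d).
Definition yd (A:alg) (a:A) (acyc : ~has_cycle A) (apr : forall x : A, Aprime x <-> x = a)
  (d : prod_alg (FD acyc apr)) : A := ginv (iter (Nd d) act d).
Definition rD (A:alg) (a:A) (acyc : ~has_cycle A) (apr : forall x : A, Aprime x <-> x = a)
  (d : prod_alg (FD acyc apr)) : A :=
  if excluded_middle_informative (inG d) then ginv d
  else if excluded_middle_informative (entry d) then
    (if excluded_middle_informative (P a (yd d)) then Psi (hA a (yd d)) (yd d) (proj1_sig (d None : Bt acyc apr))
     else chain (yd d) (Nd d))
  else proj1_sig (d None : Bt acyc apr).

Lemma ginv_spec (A:alg) (a:A) (acyc : ~has_cycle A) (apr : forall x : A, Aprime x <-> x = a)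
  (d : prod_alg (FD acyc apr)) : inG d -> gD acyc apr (ginv d) = d.
Proof. move=> H; exact: (epsilon_spec (inhabits a) (fun x => gD acyc apr x = d) H). Qed.

Lemma ginv_g (A:alg) (a:A) (acyc : ~has_cycle A) (apr : forall x : A, Aprime x <-> x = a) (x : A) :
  ginv (gD acyc apr x) = x.
Proof. apply: (@gD_inj A a acyc apr); apply: ginv_spec; by exists x. Qed.

Lemma Nd_spec (A:alg) (a:A) (acyc : ~has_cycle A) (apr : forall x : A, Aprime x <-> x = a)
  (d : prod_alg (FD acyc apr)) : entry d -> Qe d (Nd d).
Proof.
move=> [n H]; have [k [Hk Hm]] := @minimal_ex (fun n => inG (iter n act d)) (ex_intro _ n H).
exact: (epsilon_spec (inhabits 0) (Qe d) (ex_intro _ k (conj Hk Hm))).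
Qed.

Lemma Nd_eq (A:alg) (a:A) (acyc : ~has_cycle A) (apr : forall x : A, Aprime x <-> x = a)
  (d : prod_alg (FD acyc apr)) n : Qe d n -> Nd d = n.
Proof.
move=> [H1 H2]; have [K1 K2] := Nd_spec (ex_intro _ n H1).
exact: minimal_uniq K1 K2 H1 H2.
Qed.

Lemma rD_hom (A:alg) (a:A) (conn : connected A) (acyc : ~has_cycle A) (apr : forall x : A, Aprime x <-> x = a) :
  hom (@rD A a acyc apr).
Proof.
move=> d.
have gh := gD_hom conn acyc apr.
case: (classic (inG d)) => Gd.
  have [x Ex] := Gd; subst d.
  have Ga : inG (act (gD acyc apr x)) by exists (act x); rewrite gh.
  rewrite /rD.
  destruct (excluded_middle_informative (inG (act (gD acyc apr x)))) as [?|N]; last by case: N.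
  destruct (excluded_middle_informative (inG (gD acyc apr x))) as [?|N]; last by case: N; exists x.
  change (ginv (act (gD acyc apr x)) = act (ginv (gD acyc apr x))).
  by rewrite -gh !ginv_g.
case: (classic (entry d)) => Ed.
  have [Q1 Q2] := Nd_spec Ed.
  have ydE : yd d = ginv (iter (Nd d) act d) by [].
  have rd : rD d = if excluded_middle_informative (P a (yd d)) then Psi (hA a (yd d)) (yd d) (proj1_sig (d None : Bt acyc apr))
                   else chain (yd d) (Nd d).
    rewrite /rD.
    destruct (excluded_middle_informative (inG d)) as [G|?]; first by case: Gd.
    destruct (excluded_middle_informative (entry d)) as [?|N']; last by case: N'.
    by [].
  move: rd ydE Q1 Q2; move: (yd d) => y; move: (Nd d) => N rd ydE Q1 Q2.
  have gy : gD acyc apr y = iter N act d by rewrite ydE; exact: (ginv_spec Q1).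
  have zy : iter N act (proj1_sig (d None : Bt acyc apr)) = hA a y.
    rewrite -iter_sub; have := f_equal (fun e => e None) gy; rewrite iter_prod /= => <-; by [].
  have Ainfy : ~ P a y -> Ainf y by apply: notP_Ainf.
  rewrite rd.
  case: N Q1 Q2 gy zy rd ydE => [|[|k]] Q1 Q2 gy zy rd ydE.
  - by case: Gd.
  -
    have Ga : inG (act d) by exact: Q1.
    have ra : rD (act d) = y.
      rewrite /rD; destruct (excluded_middle_informative (inG (act d))) as [?|NN]; last by case: NN.
      by rewrite ydE.
    rewrite ra.
    destruct (excluded_middle_informative (P a y)) as [Py|Py].
      have Bpq := bisim_sym (hA_bisim acyc Py).
      have zy1 : act (proj1_sig (d None : Bt acyc apr)) = hA a y := zy.
      by rewrite -(Psi_act acyc Bpq zy) zy1 Psi_base.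
    have [c0 c1] := chain_spec (Ainfy Py); by rewrite c1 c0.
  have NGa : ~ inG (act d) by apply: (Q2 1).
  have Qa : Qe (act d) k.+1.
    split; first by rewrite -iterSr.
    move=> m Hm; rewrite -iterSr; apply: Q2; lia.
  have Ea : entry (act d) by exists k.+1; exact: Qa.1.
  have Na : Nd (act d) = k.+1 := Nd_eq Qa.
  have ya : yd (act d) = y by rewrite /yd Na -iterSr ydE.
  have ra : rD (act d) = if excluded_middle_informative (P a y) then Psi (hA a y) y (act (proj1_sig (d None : Bt acyc apr)))
                   else chain y k.+1.
    rewrite /rD.
    destruct (excluded_middle_informative (inG (act d))) as [G|?]; first by case: NGa.
    destruct (excluded_middle_informative (entry (act d))) as [?|N']; last by case: N'.
    rewrite ya Na; by [].
  rewrite ra.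
  destruct (excluded_middle_informative (P a y)) as [Py|Py].
    have Bpq := bisim_sym (hA_bisim acyc Py).
    by rewrite (Psi_act acyc Bpq zy).
  have [c0 c1] := chain_spec (Ainfy Py); by rewrite c1.
have NGa : ~ inG (act d) by move=> H; apply: Ed; exists 1.
have NEa : ~ entry (act d) by move=> [n H]; apply: Ed; exists n.+1; rewrite iterSr.
rewrite /rD.
destruct (excluded_middle_informative (inG (act d))) as [G|?]; first by case: NGa.
destruct (excluded_middle_informative (entry (act d))) as [G|?]; first by case: NEa.
destruct (excluded_middle_informative (inG d)) as [G|?]; first by case: Gd.
destruct (excluded_middle_informative (entry d)) as [G|?]; first by case: Ed.
by [].
Qed.

Lemma rD_g (A:alg) (a:A) (acyc : ~has_cycle A) (apr : forall x : A, Aprime x <-> x = a) (x : A) :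
  rD (gD acyc apr x) = x.
Proof.
rewrite /rD; destruct (excluded_middle_informative (inG (gD acyc apr x))) as [?|N]; last by case: N; exists x.
exact: ginv_g.
Qed.
Theorem lemma4p5 (A : alg) (a : A) :
  connected A ->
  (forall x : A, Aprime x <-> x = a) ->
  ~ has_cycle A ->
  ~ iso (@compl_alg A a) Zalg ->
  exists B : alg, in_R A B /\ S1 B /\ (forall X : alg, V1 A X <-> V2 B Ealg X).
Proof.
move=> conn apr acyc NI.
exists (Bt acyc apr); split; first exact: B_in_R.
split; first exact: B_S1.
apply: V_equal.
- exact: (inhabits a).
- exact: (inhabits (aB acyc apr)).
- exact: (inhabits (inl 0%Z : Ealg)).
- apply: V1_R; exact: B_in_R.
- apply: V1_R; exact: (E_in_R conn acyc apr NI).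
move=> C HC HK.
have CD : C (prod_alg (FD acyc apr)).
  apply: HC.2.2.2; first exact: (inhabits None).
  case=> [j|] /=; [apply: HK; by right | apply: HK; by left].
apply: HC.2.2.1 CD _.
apply: (@retract_of (prod_alg (FD acyc apr)) A (@gD A a acyc apr) (@rD A a acyc apr) a).
- exact: gD_hom.
- exact: rD_hom.
- exact: rD_g.
Qed.
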